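(* Let $(L,\wedge,\vee,0,1)$ and $(L',\wedge',\vee',0',1')$ be bounded lattices. Their additive Nakano mosaics $(L,\boxplus,0)$ and $(L',\boxplus',0')$ are isomorphic if and only if $L$ and $L'$ are isomorphic lattices. Likewise, their multiplicative Nakano mosaics $(L,\boxdot,1)$ and $(L',\boxdot',1')$ are isomorphic if and only if $L$ and $L'$ are isomorphic lattices.
   Context: The additive Nakano mosaic of a bounded lattice $L$ is $(L,\boxplus,0)$ with $x\boxplus y:=\{z\in L\mid x\vee y=x\vee z=z\vee y\}$; the multiplicative Nakano mosaic is $(L,\boxdot,1)$ with $x\boxdot y:=\{z\in L\mid x\wedge y=x\wedge z=z\wedge y\}$. An isomorphism of mosaics $(A,\boxplus,e)\to(A',\boxplus',e')$ is a bijection $f$ with $f(e)=e'$ and $f(x\boxplus y)=f(x)\boxplus' f(y)$ for all $x,y$. *)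

(* Defs.v *)
From HB Require Import structures.
From mathcomp Require Import all_boot all_order.
Set Implicit Arguments. Unset Strict Implicit. Unset Printing Implicit Defensive.
Import Order.TTheory.
Local Open Scope order_scope.

(* A (multivalued) hyperoperation on T, given by its membership relation:
   hop x y z  <->  z \in x (op) y. *)
Definition hyperop (T : Type) := T -> T -> T -> Prop.

Definition nakano_add d (L : tbLatticeType d) : hyperop L :=
  fun x y z => x `|` y = x `|` z /\ x `|` z = z `|` y.

Definition nakano_mul d (L : tbLatticeType d) : hyperop L :=
  fun x y z => x `&` y = x `&` z /\ x `&` z = z `&` y.

(* Isomorphism of mosaics (A, op, e) -> (A', op', e'): a bijection f with
   f e = e' and f (x op y) = f x op' f y (equality of sets, where the left
   side is the image set of x op y under f). *)
Definition mosaic_iso (A A' : Type) (op : hyperop A) (e : A)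
  (op' : hyperop A') (e' : A') (f : A -> A') : Prop :=
  bijective f /\ f e = e' /\
  forall x y w, (exists2 z, op x y z & f z = w) <-> op' (f x) (f y) w.

Definition mosaic_isomorphic (A A' : Type) (op : hyperop A) (e : A)
  (op' : hyperop A') (e' : A') : Prop :=
  exists f : A -> A', mosaic_iso op e op' e' f.

Definition lattice_isomorphic d d' (L : tbLatticeType d) (L' : tbLatticeType d')
  : Prop :=
  exists f : L -> L', [/\ bijective f,
    (forall x y, f (x `&` y) = f x `&` f y) &
    (forall x y, f (x `|` y) = f x `|` f y)].

(* Main.v *)
Require Import Defs.
From HB Require Import structures.
From mathcomp Require Import all_boot all_order.
Local Open Scope order_scope.
Import Order.TTheory.

Section Aux.
Variables (d d' : Order.disp_t) (L : tbLatticeType d) (L' : tbLatticeType d').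

Lemma ordiso_lat (f : L -> L') :
  bijective f -> (forall x y, (f x <= f y) = (x <= y)) -> lattice_isomorphic L L'.
Proof.
move=> bij mono; case: (bij) => g fK gK; exists f; split => //.
- move=> x y; apply: le_anti; rewrite lexI !mono leIl leIr /=.
  have gm a b : (g a <= b) = (a <= f b) by rewrite -mono gK.
  by rewrite -[f x `&` f y]gK mono lexI !gm leIl leIr.
- move=> x y; apply: le_anti; rewrite leUx !mono leUl leUr andbT.
  have gm a b : (b <= g a) = (f b <= a) by rewrite -mono gK.
  by rewrite -[f x `|` f y]gK mono leUx !gm leUl leUr.
Qed.

Lemma add_xx (x z : L) : nakano_add x x z <-> z <= x.
Proof.
rewrite /nakano_add joinxx [z `|` x]joinC; split.
  by case=> h _; rewrite leEjoin joinC -h.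
by move=> h; move: h; rewrite leEjoin joinC => /eqP ->.
Qed.

Lemma mul_xx (x z : L) : nakano_mul x x z <-> x <= z.
Proof.
rewrite /nakano_mul meetxx [z `&` x]meetC; split.
  by case=> h _; rewrite leEmeet -h.
by move=> h; move: h; rewrite leEmeet => /eqP ->.
Qed.

Lemma latiso_mono (f : L -> L') :
  bijective f -> (forall x y, f (x `|` y) = f x `|` f y) ->
  forall x y, (f x <= f y) = (x <= y).
Proof.
move=> [g fK gK] hj x y; rewrite !leEjoin -hj.
apply/eqP/eqP => [h|->//]; by rewrite -[_ `|` _]fK h fK.
Qed.

End Aux.

Theorem mainTheorem19 (d d' : Order.disp_t)
  (L : tbLatticeType d) (L' : tbLatticeType d') :
  (mosaic_isomorphic (@nakano_add d L) \bot (@nakano_add d' L') \bot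
     <-> lattice_isomorphic L L') /\
  (mosaic_isomorphic (@nakano_mul d L) \top (@nakano_mul d' L') \top
     <-> lattice_isomorphic L L').
Proof.
split; split.
- move=> [f [bij [_ H]]]; apply: (@ordiso_lat _ _ _ _ _ bij) => x y.
  have inj := bij_inj bij.
  apply/idP/idP.
    move/add_xx/(H y y)=> [z /add_xx zy /inj <-] //.
  by move/add_xx=> h; apply/add_xx/(H y y); exists x.
- move=> [f [bij hm hj]]; exists f.
  have mono := @latiso_mono _ _ _ _ _ bij hj.
  case: (bij) => g fK gK.
  split => //; split.
    by apply: le_anti; rewrite le0x -[X in _ <= X]gK mono le0x.
  move=> x y w; split.
    by move=> [z [h1 h2] <-]; rewrite /nakano_add -!hj h1 h2.
  move=> [h1 h2]; exists (g w) => //.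
  rewrite -[w]gK -!hj in h1; rewrite -[w]gK -!hj in h2; split; exact: (bij_inj bij).
- move=> [f [bij [_ H]]]; apply: (@ordiso_lat _ _ _ _ _ bij) => x y.
  have inj := bij_inj bij.
  apply/idP/idP.
    move/mul_xx/(H x x)=> [z /mul_xx zy /inj <-] //.
  by move/mul_xx=> h; apply/mul_xx/(H x x); exists y.
- move=> [f [bij hm hj]]; exists f.
  have mono := @latiso_mono _ _ _ _ _ bij hj.
  case: (bij) => g fK gK.
  split => //; split.
    by apply: le_anti; rewrite lex1 -[X in X <= _]gK mono lex1.
  move=> x y w; split.
    by move=> [z [h1 h2] <-]; rewrite /nakano_mul -!hm h1 h2.
  move=> [h1 h2]; exists (g w) => //.
  rewrite -[w]gK -!hm in h1; rewrite -[w]gK -!hm in h2; split; exact: (bij_inj bij).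
Qed.
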